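(* Let $n \leq 9$ and let $G$ be a connected $n$-vertex graph with maximum degree at most $3$ that is not isomorphic to any of $C_4$, $C_4'$, $K_4$. Then $\iota(G, C_4) \leq 1$.
   Context: All graphs are finite and simple. For $D \subseteq V(G)$, $N[D]$ is the closed neighbourhood of $D$ and $G - N[D]$ the subgraph induced by $V(G)\setminus N[D]$. A set $D \subseteq V(G)$ is a $C_4$-isolating set of $G$ if $G - N[D]$ contains no subgraph isomorphic to the $4$-cycle $C_4$; $\iota(G, C_4)$ is the minimum size of such a set. $C_4'$ is the diamond graph on $\{1,2,3,4\}$ with edges $12,23,34,41,13$. *)

(* Defs.v *)
From mathcomp Require Import all_boot.
Set Implicit Arguments. Unset Strict Implicit. Unset Printing Implicit Defensive.

Definition simple_graph (T : finType) (e : rel T) : Prop :=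
  symmetric e /\ irreflexive e.

Definition connected_graph (T : finType) (e : rel T) : Prop :=
  forall x y : T, connect e x y.

Definition neighbours (T : finType) (e : rel T) (x : T) : {set T} := [set y | e x y].

Definition max_deg_le (T : finType) (e : rel T) (k : nat) : Prop :=
  forall x : T, #|neighbours e x| <= k.

Definition closed_nbhd (T : finType) (e : rel T) (D : {set T}) : {set T} :=
  [set v | (v \in D) || [exists u in D, e u v]].

Definition has_C4_in (T : finType) (e : rel T) (S : {set T}) : Prop :=
  exists a b c d : T,
    [/\ [/\ a \in S, b \in S, c \in S & d \in S],
        uniq [:: a; b; c; d] &
        [/\ e a b, e b c, e c d & e d a]].

Definition C4_isolating (T : finType) (e : rel T) (D : {set T}) : Prop :=
  ~ has_C4_in e (~: closed_nbhd e D).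

Definition iota_C4_le (T : finType) (e : rel T) (k : nat) : Prop :=
  exists D : {set T}, #|D| <= k /\ C4_isolating e D.

Definition isomorphic_to4 (T : finType) (e : rel T) (h : rel 'I_4) : Prop :=
  exists f : T -> 'I_4, bijective f /\ forall x y, e x y = h (f x) (f y).

(* C_4 on {1,2,3,4} ~ {0,1,2,3}: edges 01,12,23,30 *)
Definition C4_rel : rel 'I_4 := fun i j =>
  let a := nat_of_ord i in let b := nat_of_ord j in
  (a != b) && ((b == (a + 1) %% 4) || (a == (b + 1) %% 4)).

(* diamond C_4': C_4 plus the chord 13 (i.e. 0--2 here) *)
Definition C4'_rel : rel 'I_4 := fun i j =>
  C4_rel i j || ((nat_of_ord i == 0) && (nat_of_ord j == 2))
             || ((nat_of_ord i == 2) && (nat_of_ord j == 0)).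

Definition K4_rel : rel 'I_4 := fun i j => i != j.

(* Main.v *)
Require Import Defs.
From mathcomp Require Import all_boot.
From Stdlib Require Import Classical.
Set Implicit Arguments. Unset Strict Implicit. Unset Printing Implicit Defensive.

Section G.
Variable T : finType.
Variable e : rel T.
Hypothesis sym : symmetric e.
Hypothesis irr : irreflexive e.
Hypothesis deg : max_deg_le e 3.

Definition cyc4 a b c d := uniq [:: a; b; c; d] && [&& e a b, e b c, e c d & e d a].
Definition avoid v x := (x != v) && ~~ e v x.

Lemma L_deg x p q r s : uniq [:: p; q; r; s] -> e x p -> e x q -> e x r -> e x s -> False.
Proof.
move=> U hp hq hr hs.
have := deg x; rewrite /neighbours => H.
have C : #|[:: p; q; r; s]| = 4 by apply/card_uniqP.
have : #|[:: p; q; r; s]| <= #|[set y | e x y]|.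
  apply: subset_leq_card; apply/subsetP => y.
  by rewrite !inE => /or4P[] /eqP->.
by rewrite C => /leq_trans/(_ H).
Qed.

Lemma cyc4_rot a b c d : cyc4 a b c d -> cyc4 b c d a.
Proof.
rewrite /cyc4 => /andP[U /and4P[h1 h2 h3 h4]]; rewrite h1 h2 h3 h4 !andbT.
by rewrite -(rot_uniq 1) in U.
Qed.

Lemma mem_rot4 (a b c d x : T) : (x \in [:: b; c; d; a]) = (x \in [:: a; b; c; d]).
Proof. by rewrite !inE; case: (x == a); rewrite ?orbT ?orbF. Qed.


Lemma in4P (a b c d x : T) : x \in [:: a; b; c; d] -> [\/ x = a, x = b, x = c | x = d].
Proof. by rewrite !inE => /or4P[]/eqP->; [constructor 1|constructor 2|constructor 3|constructor 4]. Qed.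

Lemma uniq4P (a b c d : T) : uniq [:: a; b; c; d] ->
  [/\ a != b, a != c, a != d & [/\ b != c, b != d & c != d]].
Proof.
rewrite /= !inE !negb_or andbT.
by case/and3P=> /and3P[-> -> ->] /andP[-> ->] ->.
Qed.

Lemma L_nb r1 r2 r3 r4 x : cyc4 r1 r2 r3 r4 -> x \in [:: r1; r2; r3; r4] ->
  exists n1 n2, [/\ n1 != n2, n1 \in [:: r1; r2; r3; r4], n2 \in [:: r1; r2; r3; r4], e x n1 & e x n2].
Proof.
move=> /andP[/uniq4P[h12 h13 h14 [h23 h24 h34]] /and4P[e1 e2 e3 e4]].
rewrite !inE => /or4P[]/eqP->.
- exists r2, r4; split; rewrite ?inE ?eqxx ?orbT //; by rewrite sym.
- exists r1, r3; split; rewrite ?inE ?eqxx ?orbT //; by rewrite sym.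
- exists r2, r4; split; rewrite ?inE ?eqxx ?orbT //; by rewrite sym.
- exists r1, r3; split; rewrite ?inE ?eqxx ?orbT //; by rewrite sym.
Qed.

Lemma Ldisj a b c d x y1 y2 : cyc4 a b c d -> avoid a x -> y1 != y2 -> e x y1 -> e x y2 ->
  avoid a y1 -> avoid a y2 -> x \notin [:: a; b; c; d].
Proof.
move=> /andP[/uniq4P[h12 h13 h14 [h23 h24 h34]] /and4P[e1 e2 e3 e4]].
move=> /andP[xa nax] y12 ex1 ex2 /andP[_ n1] /andP[_ n2].
rewrite !inE (negbTE xa) /=.
have nb : forall z, ~~ e a z -> z != b by move=> z nz; apply: contraNneq nz => ->.
have nd : forall z, ~~ e a z -> z != d by move=> z nz; apply: contraNneq nz => ->; rewrite sym.
rewrite (negbTE (nb _ nax)) (negbTE (nd _ nax)) orbF /=.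
apply/negP => /eqP xc; subst x.
apply: (@L_deg c b d y1 y2) => //; last by rewrite sym.
rewrite /= !inE !negb_or h24 y12 !andbT /=.
by rewrite ![b == _]eq_sym ![d == _]eq_sym !nb ?nd.
Qed.


Lemma Ldisjv a b c d v x y1 y2 : cyc4 a b c d -> v \in [:: a; b; c; d] -> avoid v x -> y1 != y2 ->
  e x y1 -> e x y2 -> avoid v y1 -> avoid v y2 -> x \notin [:: a; b; c; d].
Proof.
move=> C /in4P[]->.
- exact: Ldisj.
- rewrite -mem_rot4; exact: Ldisj (cyc4_rot C).
- rewrite -mem_rot4 -mem_rot4; exact: Ldisj (cyc4_rot (cyc4_rot C)).
- rewrite -mem_rot4 -mem_rot4 -mem_rot4; exact: Ldisj (cyc4_rot (cyc4_rot (cyc4_rot C))).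
Qed.

Lemma disjC4 a b c d v p q r s : cyc4 a b c d -> v \in [:: a; b; c; d] -> cyc4 p q r s ->
  (forall x, x \in [:: p; q; r; s] -> avoid v x) ->
  forall x, x \in [:: p; q; r; s] -> x \notin [:: a; b; c; d].
Proof.
move=> CQ vQ CP Hav x xP.
have [n1 [n2 [n12 n1P n2P e1 e2]]] := L_nb CP xP.
exact: (Ldisjv CQ vQ (Hav x xP) n12 e1 e2 (Hav n1 n1P) (Hav n2 n2P)).
Qed.

Lemma inCN v x : (x \in ~: closed_nbhd e [set v]) = avoid v x.
Proof.
rewrite /closed_nbhd !inE /avoid negb_or; congr (_ && _).
apply/negbLR; rewrite negbK; apply/existsP/idP => [[u /andP[]]|h].
  by rewrite inE => /eqP->.
by exists v; rewrite inE eqxx.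
Qed.

Lemma getC4 S : has_C4_in e S -> exists a b c d, cyc4 a b c d /\
  forall x, x \in [:: a; b; c; d] -> x \in S.
Proof.
move=> [a [b [c [d [[ha hb hc hd] U [e1 e2 e3 e4]]]]]].
exists a, b, c, d; split; first by rewrite /cyc4 U e1 e2 e3 e4.
by move=> x; rewrite !inE => /or4P[]/eqP->.
Qed.

Lemma Lpig (s1 s2 : seq T) x : uniq s1 -> size s2 <= size s1 -> {subset s1 <= s2} ->
  x \in s2 -> x \in s1.
Proof. by move=> U S1 S2; have [_ ->] := uniq_min_size U S2 S1. Qed.

Lemma cover (s : seq T) : uniq s -> #|T| <= size s -> forall x, x \in s.
Proof.
move=> U H x; apply: (@Lpig s (enum T)) => //; last by rewrite mem_enum.
  by rewrite -cardE.
by move=> y; rewrite mem_enum.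
Qed.


Lemma Lopp a b c d z x : cyc4 a b c d -> z \in [:: a; b; c; d] -> x \in [:: a; b; c; d] ->
  x != z -> ~~ e z x -> exists k1 k2, [/\ k1 != k2, e x k1, e x k2, e z k1 & e z k2].
Proof.
move=> /andP[/uniq4P[h12 h13 h14 [h23 h24 h34]] /and4P[e1 e2 e3 e4]].
have s1 := e1; rewrite sym in s1. have s2 := e2; rewrite sym in s2.
have s3 := e3; rewrite sym in s3. have s4 := e4; rewrite sym in s4.
rewrite !inE => /or4P[]/eqP-> /or4P[]/eqP-> //; rewrite ?eqxx //= => _ h; try by rewrite ?e1 ?e2 ?e3 ?e4 ?s1 ?s2 ?s3 ?s4 in h.
- by exists b, d; split.
- by exists a, c; split; rewrite // eq_sym.
- by exists b, d; split.
- by exists a, c; split; rewrite // eq_sym.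
Qed.

Lemma uniq4_sep (P : pred T) k1 k2 m1 m2 : k1 != k2 -> m1 != m2 -> P k1 -> P k2 ->
  ~~ P m1 -> ~~ P m2 -> uniq [:: k1; k2; m1; m2].
Proof.
move=> k12 m12 p1 p2 q1 q2.
have ne : forall x y, P x -> ~~ P y -> x != y by move=> x y px; apply: contraNneq => <-.
by rewrite /= !inE !negb_or k12 m12 !ne.
Qed.

Lemma cross (S : seq T) x y : connected_graph e -> x \in S -> y \notin S ->
  exists s t, [/\ s \in S, t \notin S & e s t].
Proof.
move=> Hc xS yS.
case: (boolP [exists s, exists t, [&& s \in S, t \notin S & e s t]]).
  by move=> /existsP[s /existsP[t /and3P[]]] *; exists s, t.
move=> /existsPn H; exfalso.
have cl : closed e (mem S).
  move=> s t st; apply/idP/idP => hs.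
    apply/negPn/negP => ht; have /existsPn/(_ t) := H s; by rewrite hs ht st.
  apply/negPn/negP => ht; have /existsPn/(_ s) := H t; by rewrite hs ht sym st.
by have := closed_connect cl (Hc x y); rewrite xS (negbTE yS).
Qed.

Lemma iso_of a b c d h : (forall x, x \in [:: a; b; c; d]) -> uniq [:: a; b; c; d] ->
  (forall i j : 'I_4, e (nth a [:: a; b; c; d] i) (nth a [:: a; b; c; d] j) = h i j) ->
  isomorphic_to4 e h.
Proof.
move=> All U H.
exists (fun x => inord (index x [:: a; b; c; d])); split.
  exists (fun i : 'I_4 => nth a [:: a; b; c; d] i).
    by move=> x; rewrite inordK ?index_mem ?All // nth_index ?All.
  by move=> i; apply: val_inj; rewrite index_uniq ?inord_val // (ltn_ord i).
by move=> x y; rewrite -H !inordK ?index_mem ?All // !nth_index ?All.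
Qed.


Lemma Mainlem a b c d u : #|T| <= 9 -> connected_graph e ->
  (forall v, has_C4_in e (~: closed_nbhd e [set v])) ->
  cyc4 a b c d -> u \notin [:: a; b; c; d] -> e a u -> False.
Proof.
move=> HT Hc A CQ uQ au.
have [p [q [r [s [CP HP]]]]] := getC4 (A a).
have HPa : forall x, x \in [:: p; q; r; s] -> avoid a x by move=> x /HP; rewrite inCN.
have aQ : a \in [:: a; b; c; d] by rewrite inE eqxx.
have PQ := disjC4 CQ aQ CP HPa.
have uP : u \notin [:: p; q; r; s] by apply/negP => /HPa /andP[_]; rewrite au.
have UQ : uniq [:: a; b; c; d] by case/andP: CQ.
have UP : uniq [:: p; q; r; s] by case/andP: CP.
have Hcov : forall x, x \in [:: a; b; c; d] ++ u :: [:: p; q; r; s].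
  apply: cover; last by rewrite size_cat.
  rewrite cat_uniq UQ cons_uniq uP UP !andbT andTb; apply/hasPn => x.
  by rewrite in_cons => /orP[/eqP->|/PQ //].
have cov : forall x, [\/ x \in [:: a; b; c; d], x = u | x \in [:: p; q; r; s]].
  move=> x; move: (Hcov x); rewrite mem_cat => /orP[]; first by constructor 1.
  by rewrite in_cons => /orP[/eqP->|]; [constructor 2 | constructor 3].
case: (boolP [exists y, exists z, [&& y \in [:: p; q; r; s], z \in [:: a; b; c; d] & e y z]]).
- move=> /existsP[y /existsP[z /and3P[yP zQ yz]]].
  have [r1 [r2 [r3 [r4 [CR HR]]]]] := getC4 (A y).
  have HRy : forall x, x \in [:: r1; r2; r3; r4] -> avoid y x by move=> x /HR; rewrite inCN.
  have RP := disjC4 CP yP CR HRy.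
  have UR : uniq [:: r1; r2; r3; r4] by case/andP: CR.
  have uR : u \in [:: r1; r2; r3; r4].
    apply/negPn/negP => nuR.
    have zR : z \in [:: r1; r2; r3; r4].
      apply: (@Lpig _ [:: a; b; c; d]) => // x xR.
      case: (cov x) => // [xu|xP]; first by rewrite -xu xR in nuR.
      by have := RP x xR; rewrite xP.
    by have /andP[_] := HRy z zR; rewrite yz.
  have [n1 [n2 [n12 n1R n2R un1 un2]]] := L_nb CR uR.
  have inQ : forall x, x \in [:: r1; r2; r3; r4] -> e u x -> x \in [:: a; b; c; d].
    move=> x xR ux; case: (cov x) => // [xu|xP]; first by rewrite xu irr in ux.
    by have := RP x xR; rewrite xP.
  have n1Q := inQ n1 n1R un1; have n2Q := inQ n2 n2R un2.
  have [t1 [t2 [t3 [t4 [CT HT']]]]] := getC4 (A z).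
  have HTz : forall x, x \in [:: t1; t2; t3; t4] -> avoid z x by move=> x /HT'; rewrite inCN.
  have TQ : forall x, x \in [:: t1; t2; t3; t4] -> x \notin [:: a; b; c; d].
    move=> x xT; apply/negP => xQ.
    have /andP[xz nzx] := HTz x xT.
    have [k1 [k2 [k12 xk1 xk2 zk1 zk2]]] := Lopp CQ zQ xQ xz nzx.
    have [m1 [m2 [m12 m1T m2T xm1 xm2]]] := L_nb CT xT.
    have /andP[_ nzm1] := HTz m1 m1T; have /andP[_ nzm2] := HTz m2 m2T.
    by apply: (@L_deg x k1 k2 m1 m2) => //; apply: (@uniq4_sep (e z)).
  have uT : u \notin [:: t1; t2; t3; t4].
    apply/negP => uT.
    have [m1 [m2 [m12 m1T m2T um1 um2]]] := L_nb CT uT.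
    apply: (@L_deg u n1 n2 m1 m2) => //.
    by apply: (@uniq4_sep (mem [:: a; b; c; d])) => //; apply: TQ.
  have UT : uniq [:: t1; t2; t3; t4] by case/andP: CT.
  have yT : y \in [:: t1; t2; t3; t4].
    apply: (@Lpig _ [:: p; q; r; s]) => // x xT.
    case: (cov x) => // [xQ|xu]; first by have := TQ x xT; rewrite xQ.
    by rewrite -xu xT in uT.
  by have /andP[_] := HTz y yT; rewrite sym yz.
- move=> /existsPn Hno.
  have noE : forall y z, y \in [:: p; q; r; s] -> z \in [:: a; b; c; d] -> ~~ e y z.
    move=> y z yP zQ; have /existsPn/(_ z) := Hno y; by rewrite yP zQ.
  have pP : p \in [:: p; q; r; s] by rewrite inE eqxx.
  have aP : a \notin [:: p; q; r; s] by apply/negP => /PQ; rewrite aQ.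
  have [y [t [yP tP yt]]] := cross Hc pP aP.
  have tu : t = u.
    case: (cov t) => // [tQ|]; first by rewrite (negbTE (noE _ _ yP tQ)) in yt.
    by rewrite (negbTE tP).
  subst t.
  have [r1 [r2 [r3 [r4 [CR HR]]]]] := getC4 (A u).
  have HRu : forall x, x \in [:: r1; r2; r3; r4] -> avoid u x by move=> x /HR; rewrite inCN.
  have UR : uniq [:: r1; r2; r3; r4] by case/andP: CR.
  have nQP : forall x, x \in [:: r1; r2; r3; r4] -> x \notin [:: a; b; c; d] -> x \in [:: p; q; r; s].
    move=> x xR xQ; case: (cov x) => // [xQ'|xu]; first by rewrite xQ' in xQ.
    by have /andP[] := HRu x xR; rewrite xu eqxx.
  have side : forall x x', x \in [:: r1; r2; r3; r4] -> x' \in [:: r1; r2; r3; r4] -> e x x' ->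
      (x \in [:: a; b; c; d]) = (x' \in [:: a; b; c; d]).
    move=> x x' xR x'R xx'.
    case xQ: (x \in [:: a; b; c; d]); case x'Q: (x' \in [:: a; b; c; d]) => //.
      have x'P := nQP x' x'R (negbT x'Q).
      by have := noE _ _ x'P xQ; rewrite sym xx'.
    have xP := nQP x xR (negbT xQ).
    by have := noE _ _ xP x'Q; rewrite xx'.
  move: (CR) => /andP[_ /and4P[e1 e2 e3 e4]].
  have m1 : r1 \in [:: r1; r2; r3; r4] by rewrite !inE eqxx.
  have m2 : r2 \in [:: r1; r2; r3; r4] by rewrite !inE eqxx ?orbT.
  have m3 : r3 \in [:: r1; r2; r3; r4] by rewrite !inE eqxx ?orbT.
  have m4 : r4 \in [:: r1; r2; r3; r4] by rewrite !inE eqxx ?orbT.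
  have s12 := side _ _ m1 m2 e1; have s23 := side _ _ m2 m3 e2; have s34 := side _ _ m3 m4 e3.
  case r1Q: (r1 \in [:: a; b; c; d]).
    have aR : a \in [:: r1; r2; r3; r4].
      apply: (@Lpig _ [:: a; b; c; d]) => // x.
      by move=> /in4P[]->; rewrite -?s34 -?s23 -?s12.
    by have /andP[_] := HRu a aR; rewrite sym au.
  have yR : y \in [:: r1; r2; r3; r4].
    apply: (@Lpig _ [:: p; q; r; s]) => // x xR; apply: nQP => //.
    by move: xR => /in4P[]->; rewrite -?s34 -?s23 -?s12 r1Q.
  by have /andP[_] := HRu y yR; rewrite sym yt.
Qed.

End G.

Unset Implicit Arguments.
Theorem lemma4 (T : finType) (e : rel T) :
  simple_graph e ->
  #|T| <= 9 ->
  connected_graph e ->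
  max_deg_le e 3 ->
  ~ isomorphic_to4 e C4_rel ->
  ~ isomorphic_to4 e C4'_rel ->
  ~ isomorphic_to4 e K4_rel ->
  iota_C4_le e 1.
Proof.
move=> [sym irr] HT Hc Hdeg nC4 nC4' nK4.
apply: NNPP => Hn.
have A : forall v, has_C4_in e (~: closed_nbhd e [set v]).
  move=> v; apply: NNPP => h; apply: Hn; exists [set v]; split => //.
  by rewrite cards1.
have A0 : has_C4_in e (~: closed_nbhd e set0).
  apply: NNPP => h; apply: Hn; exists set0; split => //.
  by rewrite cards0.
have [a [b [c [d [CQ _]]]]] := getC4 A0.
have aQ : a \in [:: a; b; c; d] by rewrite inE eqxx.
case: (boolP [forall x, x \in [:: a; b; c; d]]).
- move/forallP => All.
  have U : uniq [:: a; b; c; d] by case/andP: CQ.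
  move: (CQ) => /andP[_ /and4P[e1 e2 e3 e4]].
  have All' : forall x, x \in [:: b; c; d; a] by move=> x; rewrite mem_rot4.
  have U' : uniq [:: b; c; d; a] by case/andP: (cyc4_rot CQ).
  case ac: (e a c); case bd: (e b d).
  + apply: nK4; apply: (iso_of (e:=e) All U).
    case=> [[|[|[|[|i]]]] Hi]; case=> [[|[|[|[|j]]]] Hj] //=; rewrite /K4_rel /=;
    first [by rewrite irr | done | by rewrite sym].
  + apply: nC4'; apply: (iso_of (e:=e) All U).
    case=> [[|[|[|[|i]]]] Hi]; case=> [[|[|[|[|j]]]] Hj] //=; rewrite /C4'_rel /C4_rel /=;
    first [by rewrite irr | done | by rewrite sym].
  + apply: nC4'; apply: (iso_of (e:=e) All' U').
    case=> [[|[|[|[|i]]]] Hi]; case=> [[|[|[|[|j]]]] Hj] //=; rewrite /C4'_rel /C4_rel /=;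
    first [by rewrite irr | done | by rewrite sym].
  + apply: nC4; apply: (iso_of (e:=e) All U).
    case=> [[|[|[|[|i]]]] Hi]; case=> [[|[|[|[|j]]]] Hj] //=; rewrite /C4_rel /=;
    first [by rewrite irr | done | by rewrite sym].
- move/forallPn => [x xQ].
  have [s [t [sQ tQ st]]] := cross sym Hc aQ xQ.
  move: sQ => /in4P[] E; subst s.
  + exact: (Mainlem sym irr Hdeg HT Hc A CQ tQ st).
  + rewrite -mem_rot4 in tQ.
    exact: (Mainlem sym irr Hdeg HT Hc A (cyc4_rot CQ) tQ st).
  + rewrite -mem_rot4 -mem_rot4 in tQ.
    exact: (Mainlem sym irr Hdeg HT Hc A (cyc4_rot (cyc4_rot CQ)) tQ st).
  + rewrite -mem_rot4 -mem_rot4 -mem_rot4 in tQ.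
    exact: (Mainlem sym irr Hdeg HT Hc A (cyc4_rot (cyc4_rot (cyc4_rot CQ))) tQ st).
Qed.
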